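(* Let $p\ge1$, $m\in\mathbb{N}$, $a,b>0$, $\beta\in\mathbb{R}^p$, let $\xi_1,\ldots,\xi_r$ be designs on $\mathcal{X}$ and $q_1,\ldots,q_r\in[0,1]$ with $\sum_{i=1}^r q_i=1$, and let $\zeta$ be the population design assigning weight $q_i$ to $\xi_i$, with information matrix $M(\zeta;\beta)=\sum_{i=1}^r q_iM(\xi_i;\beta)$. Let $\xi=\sum_{i=1}^r q_i\xi_i$ (the mixture of the probability measures $\xi_i$) and let $\tilde\zeta$ be the population design assigning weight 1 to $\xi$, so $M(\tilde\zeta;\beta)=M(\xi;\beta)$. Then $M(\tilde\zeta;\beta)\ge M(\zeta;\beta)$ in the Loewner order. Consequently, for every isotonic criterion function $\Phi$ (i.e. $\Phi(M_1)\ge\Phi(M_2)$ whenever $M_1\ge M_2$ are positive semidefinite), $\Phi(M(\tilde\zeta;\beta))\ge\Phi(M(\zeta;\beta))$.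
   Context: Let $\mathcal{X}\subseteq\mathbb{R}^k$ be a design region and $f=(1,f_1,\ldots,f_{p-1})^T:\mathcal{X}\to\mathbb{R}^p$ a vector of regression functions whose first component is the constant 1. A design $\xi$ is a probability measure on $\mathcal{X}$ with finite support $x_1,\ldots,x_l$ and weights $w_1,\ldots,w_l\ge0$, $\sum_j w_j=1$. The Poisson information matrix is $M_{Po}(\xi;\beta)=\sum_{j=1}^l w_j\exp(f(x_j)^T\beta)f(x_j)f(x_j)^T$, and the Poisson–Gamma information matrix is $M(\xi;\beta)=\frac{a}{b}\Bigl(M_{Po}(\xi;\beta)-\frac{M_{Po}(\xi;\beta)e_1e_1^TM_{Po}(\xi;\beta)}{e_1^TM_{Po}(\xi;\beta)e_1+b/m}\Bigr)$, where $e_1$ is the first standard unit vector of $\mathbb{R}^p$. The Loewner order is $M_1\ge M_2$ iff $M_1-M_2$ is positive semidefinite. *)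

(* Defs.v *)
From HB Require Import structures.
From mathcomp Require Import all_boot all_order all_algebra.
From mathcomp Require Import reals sequences exp.
Set Implicit Arguments. Unset Strict Implicit. Unset Printing Implicit Defensive.
Import Order.TTheory GRing.Theory Num.Theory.
Local Open Scope ring_scope.

Definition design (R : realType) (k : nat) := seq ('rV[R]_k * R).

Definition is_design (R : realType) (k : nat) (X : pred 'rV[R]_k)
  (xi : design R k) : Prop :=
  (forall xw, xw \in xi -> xw.1 \in X /\ 0 <= xw.2) /\
  \sum_(xw <- xi) xw.2 = 1.

Definition e1 (R : realType) (p' : nat) : 'cV[R]_p'.+1 :=
  \col_i (i == ord0)%:R.

Definition M_Po (R : realType) (k p' : nat) (f : 'rV[R]_k -> 'cV[R]_p'.+1)
  (xi : design R k) (beta : 'cV[R]_p'.+1) : 'M[R]_p'.+1 :=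
  \sum_(xw <- xi)
     (xw.2 * expR (((f xw.1)^T *m beta) ord0 ord0)) *: (f xw.1 *m (f xw.1)^T).

Definition M_PG (R : realType) (k p' : nat) (f : 'rV[R]_k -> 'cV[R]_p'.+1)
  (a b : R) (m : nat) (xi : design R k) (beta : 'cV[R]_p'.+1) : 'M[R]_p'.+1 :=
  let MP := M_Po f xi beta in
  (a / b) *: (MP - ((((e1 R p')^T *m MP *m e1 R p') ord0 ord0 + b / m%:R)^-1)
                    *: (MP *m e1 R p' *m (e1 R p')^T *m MP)).

Definition mixture (R : realType) (k r : nat) (q : 'I_r -> R)
  (xis : 'I_r -> design R k) : design R k :=
  flatten [seq [seq (xw.1, q i * xw.2) | xw <- xis i] | i <- enum 'I_r].

Definition M_pop (R : realType) (k p' r : nat) (f : 'rV[R]_k -> 'cV[R]_p'.+1)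
  (a b : R) (m : nat) (q : 'I_r -> R) (xis : 'I_r -> design R k)
  (beta : 'cV[R]_p'.+1) : 'M[R]_p'.+1 :=
  \sum_(i < r) q i *: M_PG f a b m (xis i) beta.

Definition psd (R : realType) (n : nat) (A : 'M[R]_n) : Prop :=
  A^T = A /\ forall v : 'cV[R]_n, 0 <= (v^T *m A *m v) ord0 ord0.

Definition loewner_ge (R : realType) (n : nat) (A B : 'M[R]_n) : Prop :=
  psd (A - B).

Definition isotonic (R : realType) (n : nat) (Phi : 'M[R]_n -> R) : Prop :=
  forall M1 M2 : 'M[R]_n, psd M1 -> psd M2 -> loewner_ge M1 M2 -> Phi M2 <= Phi M1.

(* Main.v *)
Set Warnings "-all".
Require Import Defs.
From HB Require Import structures.
From mathcomp Require Import all_boot all_order all_algebra.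
From mathcomp Require Import reals sequences exp.
From mathcomp Require Import ring lra.
Import Order.TTheory GRing.Theory Num.Theory.
Local Open Scope ring_scope.

Section Core.
Variables (R : realType) (n : nat).
Implicit Types (M N : 'M[R]_n) (v w e : 'cV[R]_n).

Lemma eD (A B : 'M[R]_1) : (A + B) 0 0 = A 0 0 + B 0 0.
Proof. by rewrite !mxE. Qed.
Lemma eB (A B : 'M[R]_1) : (A - B) 0 0 = A 0 0 - B 0 0.
Proof. by rewrite !mxE. Qed.
Lemma eZ k (A : 'M[R]_1) : (k *: A) 0 0 = k * A 0 0.
Proof. by rewrite !mxE. Qed.

Lemma eT (A : 'M[R]_1) : A^T 0 0 = A 0 0.
Proof. by rewrite !mxE. Qed.

Definition bf v w M := (v^T *m M *m w) 0 0.

Lemma bfDm v w M N : bf v w (M + N) = bf v w M + bf v w N.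
Proof. by rewrite /bf mulmxDr mulmxDl eD. Qed.
Lemma bfBm v w M N : bf v w (M - N) = bf v w M - bf v w N.
Proof. by rewrite /bf mulmxBr mulmxBl eB. Qed.
Lemma bfZm v w k M : bf v w (k *: M) = k * bf v w M.
Proof. by rewrite /bf -scalemxAr -scalemxAl eZ. Qed.
Lemma bf_summ v w (I : Type) (s : seq I) (F : I -> 'M[R]_n) :
  bf v w (\sum_(i <- s) F i) = \sum_(i <- s) bf v w (F i).
Proof. by rewrite /bf mulmx_sumr mulmx_suml summxE. Qed.
Lemma bf_sumZ v w (r : nat) (q : 'I_r -> R) (F : 'I_r -> 'M[R]_n) :
  bf v w (\sum_i q i *: F i) = \sum_i q i * bf v w (F i).
Proof. by rewrite bf_summ; apply: eq_bigr => i _; rewrite bfZm. Qed.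
Lemma bfBl v1 v2 w M : bf (v1 - v2) w M = bf v1 w M - bf v2 w M.
Proof. by rewrite /bf linearB /= !mulmxBl eB. Qed.
Lemma bfZl k v w M : bf (k *: v) w M = k * bf v w M.
Proof. by rewrite /bf linearZ /= -!scalemxAl eZ. Qed.
Lemma bfBr v w1 w2 M : bf v (w1 - w2) M = bf v w1 M - bf v w2 M.
Proof. by rewrite /bf mulmxBr eB. Qed.
Lemma bfZr k v w M : bf v (k *: w) M = k * bf v w M.
Proof. by rewrite /bf -scalemxAr eZ. Qed.

Lemma mul11 (x y : 'M[R]_1) : (x *m y) 0 0 = x 0 0 * y 0 0.
Proof. by rewrite mxE big_ord1. Qed.

Lemma bf_sym v w M : M^T = M -> bf v w M = bf w v M.
Proof.
move=> hM; rewrite /bf.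
transitivity ((v^T *m M *m w)^T 0 0); first by rewrite eT.
by rewrite !trmx_mul trmxK hM mulmxA.
Qed.

Lemma bf_outer v w e M :
  bf v w (M *m e *m e^T *m M) = bf v e M * bf e w M.
Proof.
rewrite /bf -mul11; congr (_ 0 0); by rewrite !mulmxA.
Qed.

Definition G (c : R) e M := M - ((bf e e M) + c)^-1 *: (M *m e *m e^T *m M).

Lemma qf_G c e M v : M^T = M ->
  bf v v (G c e M) = bf v v M - bf v e M ^+ 2 / (bf e e M + c).
Proof.
move=> hM; rewrite /G bfBm bfZm bf_outer (bf_sym e v M hM).
by rewrite expr2 mulrC.
Qed.

Lemma G_sym c e M : M^T = M -> (G c e M)^T = G c e M.
Proof.
move=> hM; rewrite /G linearB /= linearZ /= !trmx_mul trmxK hM !mulmxA.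
done.
Qed.

Lemma psd0 : psd (0 : 'M[R]_n).
Proof. split; first by rewrite trmx0. by move=> v; rewrite mulmx0 mul0mx mxE. Qed.

Lemma psdD M N : psd M -> psd N -> psd (M + N).
Proof.
move=> [h1 h2] [h3 h4]; split; first by rewrite linearD /= h1 h3.
move=> v; have := h2 v; have := h4 v; rewrite -!/(bf v v _) bfDm.
move=> *; exact: addr_ge0.
Qed.

Lemma psdZ k M : 0 <= k -> psd M -> psd (k *: M).
Proof.
move=> hk [h1 h2]; split; first by rewrite linearZ /= h1.
move=> v; have := h2 v; rewrite -!/(bf v v _) bfZm => ?; exact: mulr_ge0.
Qed.

Lemma psd_sum (I : Type) (s : seq I) (F : I -> 'M[R]_n) :
  (forall i, psd (F i)) -> psd (\sum_(i <- s) F i).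
Proof.
move=> h; elim/big_ind: _ => //; [exact: psd0 | exact: psdD].
Qed.

Lemma G_psd c e M : 0 < c -> psd M -> psd (G c e M).
Proof.
move=> hc [hM hpos]; split; first exact: G_sym.
move=> v; rewrite -/(bf v v _) qf_G //.
set A := bf v v M; set B := bf v e M; set s := bf e e M.
have hs : 0 <= s by apply: hpos.
set d := s + c.
have hd : 0 < d by rewrite /d; lra.
set t := B / d.
have := hpos (v - t *: e); rewrite -/(bf _ _ _) bfBl !bfBr !bfZl !bfZr.
rewrite (bf_sym e v M hM) -/A -/B -/s => h.
have -> : A - B ^+ 2 / d = (A - t * B - t * B + t * (t * s)) + t ^+ 2 * c.
  rewrite /t /d; field; lra.
have h2 : 0 <= t ^+ 2 * c by rewrite mulr_ge0 ?sqr_ge0 ?ltW.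
move: h h2; lra.
Qed.

Lemma sym_sum (r : nat) (F : 'I_r -> 'M[R]_n) :
  (forall i, (F i)^T = F i) -> (\sum_i F i)^T = \sum_i F i.
Proof. move=> h; rewrite linear_sum /=; apply: eq_bigr => i _; exact: h. Qed.

Lemma G_concave (r : nat) c e (Ms : 'I_r -> 'M[R]_n) (q : 'I_r -> R) :
  0 < c -> (forall i, psd (Ms i)) -> (forall i, 0 <= q i) -> \sum_i q i = 1 ->
  psd (G c e (\sum_i q i *: Ms i) - \sum_i q i *: G c e (Ms i)).
Proof.
move=> hc hM hq hqs.
have hsym : (\sum_i q i *: Ms i)^T = \sum_i q i *: Ms i.
  by apply: sym_sum => i; rewrite linearZ /= (proj1 (hM i)).
split.
  rewrite linearB /= G_sym // sym_sum // => i.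
  by rewrite linearZ /= G_sym // (proj1 (hM i)).
move=> v; rewrite -/(bf v v _) bfBm qf_G // !bf_sumZ.
have -> : \sum_i q i * bf v v (G c e (Ms i)) = \sum_i q i *
   (bf v v (Ms i) - bf v e (Ms i) ^+ 2 / (bf e e (Ms i) + c)).
  by apply: eq_bigr => i _; rewrite qf_G // (proj1 (hM i)).
set A := fun i => bf v v (Ms i).
set B := fun i => bf v e (Ms i).
set s := fun i => bf e e (Ms i).
have hs : forall i, 0 <= s i by move=> i; apply: (proj2 (hM i)).
have hSs : 0 <= \sum_i q i * s i by apply: sumr_ge0 => i _; exact: mulr_ge0.
set d := \sum_i q i * s i + c.
have hd : 0 < d by rewrite /d; lra.
set t := (\sum_i q i * B i) / d.
have key : forall i, 2 * t * B i - t ^+ 2 * (s i + c) <= B i ^+ 2 / (s i + c).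
  move=> i; have hdi : 0 < s i + c by have := hs i; lra.
  rewrite -subr_ge0.
  have -> : B i ^+ 2 / (s i + c) - (2 * t * B i - t ^+ 2 * (s i + c))
     = (B i - t * (s i + c)) ^+ 2 / (s i + c) by field; lra.
  by rewrite divr_ge0 ?sqr_ge0 ?ltW.
have hsum : \sum_i q i * (2 * t * B i - t ^+ 2 * (s i + c)) <=
            \sum_i q i * (B i ^+ 2 / (s i + c)).
  by apply: ler_sum => i _; apply: ler_wpM2l; [exact: hq | exact: key].
have e1 : \sum_i q i * (2 * t * B i - t ^+ 2 * (s i + c)) =
   2 * t * (\sum_i q i * B i) - t ^+ 2 * (\sum_i q i * s i) - t ^+ 2 * c * (\sum_i q i).
  rewrite !mulr_sumr -!sumrB; apply: eq_bigr => i _; ring.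
rewrite hqs mulr1 in e1.
have e2 : 2 * t * (\sum_i q i * B i) - t ^+ 2 * (\sum_i q i * s i) - t ^+ 2 * c
   = (\sum_i q i * B i) ^+ 2 / d.
  rewrite /t /d; field; lra.
have e3 : \sum_i q i * (A i - B i ^+ 2 / (s i + c)) =
   \sum_i q i * A i - \sum_i q i * (B i ^+ 2 / (s i + c)).
  rewrite -sumrB; apply: eq_bigr => i _; ring.
rewrite e3; move: hsum; rewrite e1 e2 -/d; lra.
Qed.
End Core.

Lemma M_PG_G (R : realType) (k p' : nat) (f : 'rV[R]_k -> 'cV[R]_p'.+1)
  (a b : R) (m : nat) (xi : design R k) (beta : 'cV[R]_p'.+1) :
  M_PG f a b m xi beta = (a / b) *: @G R p'.+1 (b / m%:R) (e1 R p') (M_Po f xi beta).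
Proof. by []. Qed.

Lemma M_Po_mix (R : realType) (k p' r : nat) (f : 'rV[R]_k -> 'cV[R]_p'.+1)
  (q : 'I_r -> R) (xis : 'I_r -> design R k) (beta : 'cV[R]_p'.+1) :
  M_Po f (mixture q xis) beta = \sum_i q i *: M_Po f (xis i) beta.
Proof.
rewrite /M_Po /mixture big_flatten /= big_map big_enum /=.
apply: eq_bigr => i _; rewrite big_map scaler_sumr; apply: eq_bigr => xw _ /=.
by rewrite scalerA mulrA.
Qed.

Lemma M_Po_psd (R : realType) (k p' : nat) (X : pred 'rV[R]_k)
  (f : 'rV[R]_k -> 'cV[R]_p'.+1) (xi : design R k) (beta : 'cV[R]_p'.+1) :
  is_design X xi -> psd (M_Po f xi beta).
Proof.
move=> [hw _]; rewrite /M_Po big_seq.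
apply: (big_ind (fun M => psd M)); [exact: psd0 | exact: psdD |].
move=> xw hxw; apply: psdZ.
  by apply: mulr_ge0; [exact: (proj2 (hw xw hxw)) | exact: expR_ge0].
split; first by rewrite trmx_mul trmxK.
move=> v.
have -> : v^T *m (f xw.1 *m (f xw.1)^T) *m v = (v^T *m f xw.1) *m ((f xw.1)^T *m v).
  by rewrite !mulmxA.
rewrite mul11.
have -> : ((f xw.1)^T *m v) 0 0 = (v^T *m f xw.1) 0 0.
  by rewrite -eT trmx_mul trmxK.
rewrite -expr2; exact: sqr_ge0.
Qed.

Theorem corollary1 (R : realType) (k p' : nat) (X : pred 'rV[R]_k)
  (f : 'rV[R]_k -> 'cV[R]_p'.+1)
  (hf1 : forall x, x \in X -> f x ord0 ord0 = 1)
  (m : nat) (hm : (0 < m)%N) (a b : R) (ha : 0 < a) (hb : 0 < b)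
  (beta : 'cV[R]_p'.+1) (r : nat)
  (xis : 'I_r -> design R k) (hxis : forall i, is_design X (xis i))
  (q : 'I_r -> R) (hq : forall i, 0 <= q i <= 1) (hqs : \sum_(i < r) q i = 1) :
  loewner_ge (M_PG f a b m (mixture q xis) beta) (M_pop f a b m q xis beta) /\
  (forall Phi : 'M[R]_p'.+1 -> R, isotonic Phi ->
     Phi (M_pop f a b m q xis beta) <= Phi (M_PG f a b m (mixture q xis) beta)).
Proof.
have hc : 0 < b / m%:R by rewrite divr_gt0 // ltr0n.
have hab : 0 <= a / b by rewrite ltW // divr_gt0.
have hq0 : forall i, 0 <= q i by move=> i; case/andP: (hq i).
have hPo : forall i, psd (M_Po f (xis i) beta) by move=> i; exact: M_Po_psd (hxis i).
have hpop : M_pop f a b m q xis beta =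
    (a / b) *: \sum_i q i *: @G R p'.+1 (b / m%:R) (e1 R p') (M_Po f (xis i) beta).
  rewrite /M_pop scaler_sumr; apply: eq_bigr => i _.
  by rewrite M_PG_G !scalerA mulrC.
have hL : loewner_ge (M_PG f a b m (mixture q xis) beta) (M_pop f a b m q xis beta).
  rewrite /loewner_ge hpop M_PG_G M_Po_mix -scalerBr; apply: psdZ => //.
  exact: G_concave.
split => // Phi hPhi; apply: hPhi => //.
  rewrite M_PG_G M_Po_mix; apply: psdZ => //; apply: G_psd => //.
  by apply: psd_sum => i; apply: psdZ.
rewrite hpop; apply: psdZ => //; apply: psd_sum => i; apply: psdZ => //.
exact: G_psd.
Qed.
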